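(* Assume $n\ge3$. Then every zero of $F$ that lies strictly between two zeros of $g$ (i.e. between two singularities of $F$) is not acceptable.
   Context: Data: an integer $N\ge 2$, reals $x_A<x_B$, $R=x_B-x_A$, and bins $i=1,\dots,N$ with widths $\Delta x_i>0$ and centers $x_i$ that tile $[x_A,x_B]$ contiguously in increasing order, so that $x_1-x_A=\Delta x_1/2$, $x_N-x_A=R-\Delta x_N/2$ and $0<x_1-x_A<\dots<x_N-x_A<R$. The counts are $y_i\in\{0,1,2,\dots\}$, $M=\sum_i y_i$, and $n$ is the number of indices with $y_i\ge1$. Write $d_i=x_i-x_A$. Define $$g(a)=\sum_{i=1}^N y_i\frac{d_i}{1+a d_i}$$ for $a\notin\{-1/d_i: y_i\ge 1\}$; these excluded points are the poles of $g$. Define $$F(a)=1+\frac R2\Big(a-\frac{M}{g(a)}\Big)$$ wherever $g(a)$ is finite and nonzero. At poles of $g$, $F(a)=1+aR/2$ by continuity. Let $\lambda(a)=M/(R(1+aR/2))$ for $a\neq-2/R$. A zero $a^*$ of $F$ is called acceptable if $a^*\ne-2/R$ and $\lambda(a^* )(1+a^*d_i)\ge0$ for all $i$, i.e. the linear model $f(x)=\lambda(1+a(x-x_A))$ with $(a,\lambda)=(a^*,\lambda(a^* ))$ has non-negative Poisson means $\mu_i=f(x_i)\Delta x_i$ in every bin. *)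

(* Defs.v *)
From mathcomp Require Import all_boot all_order all_algebra.
Set Implicit Arguments. Unset Strict Implicit. Unset Printing Implicit Defensive.
Import Order.TTheory GRing.Theory Num.Theory.
Local Open Scope ring_scope.

Section Defs.
Variables (R : realFieldType) (N : nat).
Variables (xA xB : R) (x : 'I_N -> R) (y : 'I_N -> nat).

Definition dist (i : 'I_N) : R := x i - xA.
Definition range : R := xB - xA.

Definition Mtot : R := (\sum_(i < N) y i)%N%:R.
Definition nonempty_bins : nat := #|[set i : 'I_N | (0 < y i)%N]|.

Definition is_pole (a : R) : bool :=
  [exists i : 'I_N, (0 < y i)%N && (1 + a * dist i == 0)].

Definition gfun (a : R) : R :=
  \sum_(i < N) (y i)%:R * (dist i / (1 + a * dist i)).

(* F, extended by continuity at poles of g *)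
Definition Ffun (a : R) : R :=
  if is_pole a then 1 + a * range / 2
  else 1 + range / 2 * (a - Mtot / gfun a).

(* a is a zero of F: F is defined at a (g finite and nonzero, or a pole) and F(a)=0 *)
Definition F_zero (a : R) : Prop :=
  (is_pole a \/ gfun a != 0) /\ Ffun a = 0.

Definition g_zero (a : R) : Prop := ~~ is_pole a /\ gfun a = 0.

Definition lambda (a : R) : R := Mtot / (range * (1 + a * range / 2)).

Definition acceptable (a : R) : Prop :=
  a != - 2 / range /\ forall i : 'I_N, 0 <= lambda a * (1 + a * dist i).

End Defs.

(* Main.v *)
Require Import Defs.
From mathcomp Require Import all_boot all_order all_algebra.
From mathcomp Require Import ring lra.
Import Order.TTheory GRing.Theory Num.Theory.
Local Open Scope ring_scope.

Lemma g_pos (R : realFieldType) (N : nat) (xA : R) (x : 'I_N -> R) (y : 'I_N -> nat) z i0 :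
  (forall i, 0 < dist xA x i) -> (0 < y i0)%N ->
  (forall i, (0 < y i)%N -> 0 < 1 + z * dist xA x i) -> 0 < gfun xA x y z.
Proof.
move=> hd hi0 hp; rewrite /gfun (bigD1 i0) //=.
apply: ltr_wpDr.
  apply: sumr_ge0 => i _; case: (posnP (y i)) => [->|yp]; first by rewrite mul0r.
  by apply: mulr_ge0; [exact: ler0n | apply: divr_ge0; [exact: ltW | exact: ltW (hp _ yp)]].
by apply: mulr_gt0; [rewrite ltr0n | apply: divr_gt0; [exact: hd | exact: hp]].
Qed.

Lemma g_neg (R : realFieldType) (N : nat) (xA : R) (x : 'I_N -> R) (y : 'I_N -> nat) z i0 :
  (forall i, 0 < dist xA x i) -> (0 < y i0)%N ->
  (forall i, (0 < y i)%N -> 1 + z * dist xA x i < 0) -> gfun xA x y z < 0.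
Proof.
move=> hd hi0 hp; rewrite /gfun (bigD1 i0) //=.
rewrite -oppr_gt0 opprD; apply: ltr_wpDr.
  rewrite -sumrN; apply: sumr_ge0 => i _; case: (posnP (y i)) => [->|yp]; first by rewrite mul0r oppr0.
  rewrite -mulrN; apply: mulr_ge0; first exact: ler0n.
  rewrite -mulrN -invrN; apply: divr_ge0; first exact: ltW.
  by rewrite oppr_ge0; apply: ltW; apply: hp.
rewrite -mulrN; apply: mulr_gt0; first by rewrite ltr0n.
rewrite -mulrN -invrN; apply: divr_gt0; first exact: hd.
by rewrite oppr_gt0; apply: hp.
Qed.

Arguments g_pos {R N xA x y z i0}.
Arguments g_neg {R N xA x y z i0}.

Theorem mainTheorem8 (R : realFieldType) (N : nat) (xA xB : R)
    (dx x : 'I_N -> R) (y : 'I_N -> nat) :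
  (2 <= N)%N ->
  xA < xB ->
  (forall i, 0 < dx i) ->
  (\sum_(i < N) dx i = xB - xA) ->
  (forall i : 'I_N, x i = xA + \sum_(j < N | (j < i)%N) dx j + dx i / 2) ->
  (3 <= nonempty_bins y)%N ->
  forall z1 z2 a : R,
    g_zero xA x y z1 -> g_zero xA x y z2 -> z1 < a < z2 ->
    F_zero xA xB x y a ->
    ~ acceptable xA xB x y a.
Proof.
move=> _ hAB hdx _ hx hn z1 z2 a [_ g1] [_ g2] /andP[h1 h2] _ [hne hall].
have hd : forall i, 0 < dist xA x i.
  move=> i; rewrite /dist hx; have -> : forall u v w : R, u + v + w - u = v + w by move=> *; ring. apply: ltr_wpDl.
    by apply: sumr_ge0 => j _; exact: ltW.
  by apply: divr_gt0.
have [i0 hi0] : exists i0, (0 < y i0)%N.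
  have : (0 < nonempty_bins y)%N by apply: leq_trans _ hn.
  rewrite /nonempty_bins card_gt0 => /set0Pn [i hi]; rewrite inE in hi; by exists i.
have /existsP [ip /andP[yp pp]] : [exists i, (0 < y i)%N && (0 < 1 + a * dist xA x i)].
  apply: contraT => /existsPn hno.
  have : gfun xA x y z1 < 0.
    apply: (g_neg hd hi0) => i yi.
    have := hno i; rewrite yi /= -leNgt => hle.
    apply: lt_le_trans hle; rewrite ltrD2l; by rewrite ltr_pM2r.
  by rewrite g1 ltxx.
have /existsP [in_ /andP[yn nn]] : [exists i, (0 < y i)%N && (1 + a * dist xA x i < 0)].
  apply: contraT => /existsPn hno.
  have : 0 < gfun xA x y z2.
    apply: (g_pos hd hi0) => i yi.
    have := hno i; rewrite yi /= -leNgt => hle.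
    apply: le_lt_trans hle _; rewrite ltrD2l; by rewrite ltr_pM2r.
  by rewrite g2 ltxx.
have l1 := hall ip; have l2 := hall in_.
rewrite pmulr_lge0 // in l1; rewrite nmulr_lge0 // in l2.
have l0 : lambda xA xB y a = 0 by apply/eqP; rewrite eq_le l1 l2.
move: l0; rewrite /lambda => /eqP; rewrite mulf_eq0 invr_eq0 mulf_eq0 => /orP[|/orP[]].
- rewrite /Mtot pnatr_eq0 (bigD1 i0) //= addn_eq0 => /andP[/eqP h _].
  by move: hi0; rewrite h.
- by rewrite /range subr_eq0 => /eqP h; move: hAB; rewrite h ltxx.
- move=> /eqP h; move/eqP: hne; apply.
  have rn : range xA xB != 0 by rewrite /range subr_eq0 gt_eqF.
  apply: (mulIf rn); rewrite divfK //; lra.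
Qed.
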